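(* Given a linear-non-linear adjunction $\mathcal F\dashv\mathcal U$, define $\mathcal U^S:LS(\mathscr C)\to S(\mathscr C)$ by $\mathcal U^S(X,A):=(X,\mathcal U(A))$ and, for $(f,u):(X,A)\to(Y,B)$, $\mathcal U^S(f,u):=(f,(\eta_X\times\mathrm{id}_{\mathcal U(A)});n_{\mathcal F(X),A};\mathcal U(u))$. Then $\mathcal U^S$ is a functor and a split fibred functor from $\mathbf{ls}$ to $\mathbf s$ (i.e. $\mathbf s\circ\mathcal U^S=\mathbf{ls}$ and $\mathcal U^S$ sends the chosen cartesian morphisms of $\mathbf{ls}$ to those of $\mathbf s$). Moreover, on each fibre over $X$ it is a symmetric lax monoidal functor from $(LS(\mathscr C)_X,\otimes_X,(X,1))$ to $(S(\mathscr C)_X,\times_X,(X,I))$, with structure maps $(\mathrm{id}_X,\pi_2;n_I):(X,I)\to\mathcal U^S(X,1)$ and $(\mathrm{id}_X,\pi_2;n_{A,B}):\mathcal U^S(X,A)\times_X\mathcal U^S(X,B)\to\mathcal U^S((X,A)\otimes_X(X,B))$.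
   Context: Composition is diagrammatic; monoidal categories are strict. A linear-non-linear adjunction is a symmetric monoidal adjunction $\mathcal F\dashv\mathcal U$, $\mathcal F:\mathscr C\to\mathcal L$, between a cartesian category $(\mathscr C,\times,I)$ and a symmetric monoidal category $(\mathcal L,\otimes,1)$ (symmetry $\sigma$); $\mathcal U$ lax monoidal via $n_{A,B}:\mathcal U(A)\times\mathcal U(B)\to\mathcal U(A\otimes B)$, $n_I:I\to\mathcal U(1)$; $\mathcal F$ strong monoidal via isomorphisms $m_{X,Y}:\mathcal F(X)\otimes\mathcal F(Y)\to\mathcal F(X\times Y)$, $m_1:1\to\mathcal F(I)$; unit $\eta$. $\mathbf c_X:=\mathcal F(\Delta_X);m_{X,X}^{-1}$, $\mathbf w_X:=\mathcal F(t_X);m_1^{-1}$ with $t_X:X\to I$ terminal. Simple category $S(\mathscr C)$: objects $(X,J)$, $X,J\in\mathscr C$; morphisms $(f,u):(X,J)\to(Y,K)$ with $f:X\to Y$, $u:X\times J\to K$; composition $(f,u);(g,v)=(f;g,(\Delta_X\times\mathrm{id}_J);(f\times u);v)$, identity $(\mathrm{id}_X,\pi_2)$; split fibration $\mathbf s(f,u)=f$ with chosen cartesian morphisms $(f,\pi_2):(X,K)\to(Y,K)$; fibre $S(\mathscr C)_X$ (morphisms $(\mathrm{id}_X,u)$) has cartesian product $(X,J)\times_X(X,K)=(X,J\times K)$, unit $(X,I)$. Linear simple category $LS(\mathscr C)$: objects $(X,A)$, $X\in\mathscr C$, $A\in\mathcal L$; morphisms $(f,u):(X,A)\to(Y,B)$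 with $f:X\to Y$, $u:\mathcal F(X)\otimes A\to B$; composition $(f,u);(g,v)=(f;g,(\mathbf c_X\otimes\mathrm{id}_A);(\mathcal F(f)\otimes u);v)$, identity $(\mathrm{id}_X,\mathbf w_X\otimes\mathrm{id}_A)$; split fibration $\mathbf{ls}(f,u)=f$ with chosen cartesian morphisms $(f,\mathbf w_X\otimes\mathrm{id}_B):(X,B)\to(Y,B)$; fibre $LS(\mathscr C)_X$ has objects $(X,A)$, morphisms $(\mathrm{id}_X,u)$, and monoidal structure $(X,A)\otimes_X(X,B)=(X,A\otimes B)$, unit $(X,1)$, $(\mathrm{id}_X,u)\otimes_X(\mathrm{id}_X,v)=(\mathrm{id}_X,(\mathbf c_X\otimes\mathrm{id}_{A\otimes B});(\mathrm{id}_{\mathcal F(X)}\otimes\sigma_{\mathcal F(X),A}\otimes\mathrm{id}_B);(u\otimes v))$. *)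

(* Defs.v *)
(* Composition is DIAGRAMMATIC: f >>> g is
   "first f, then g". *)

Set Implicit Arguments.
Unset Strict Implicit.

Record Category : Type := {
  ob :> Type;
  hom : ob -> ob -> Type;
  idm : forall a, hom a a;
  comp : forall {a b c}, hom a b -> hom b c -> hom a c;
  comp_idl : forall a b (f : hom a b), comp (idm a) f = f;
  comp_idr : forall a b (f : hom a b), comp f (idm b) = f;
  comp_assoc : forall a b c d (f : hom a b) (g : hom b c) (h : hom c d),
      comp (comp f g) h = comp f (comp g h)
}.
Arguments hom {_} _ _.
Arguments idm {_} _.
Arguments comp {_ _ _ _} _ _.

Notation "f >>> g" := (comp f g) (at level 40, left associativity).

Record Functor (C D : Category) : Type := {
  fobj :> C -> D;
  fmap : forall {a b : C}, hom a b -> hom (fobj a) (fobj b);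
  fmap_id : forall a, fmap (idm a) = idm (fobj a);
  fmap_comp : forall a b c (f : hom a b) (g : hom b c),
      fmap (f >>> g) = fmap f >>> fmap g
}.
Arguments fmap {_ _} _ {_ _} _.

Record CartesianCat : Type := {
  ccat :> Category;
  prod : ccat -> ccat -> ccat;
  p1 : forall {X Y : ccat}, hom (prod X Y) X;
  p2 : forall {X Y : ccat}, hom (prod X Y) Y;
  pair : forall {Z X Y : ccat}, hom Z X -> hom Z Y -> hom Z (prod X Y);
  pair_p1 : forall Z X Y (f : hom Z X) (g : hom Z Y), pair f g >>> p1 = f;
  pair_p2 : forall Z X Y (f : hom Z X) (g : hom Z Y), pair f g >>> p2 = g;
  pair_uniq : forall Z X Y (h : hom Z (prod X Y)), h = pair (h >>> p1) (h >>> p2);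
  term : ccat;
  bang : forall X : ccat, hom X term;
  bang_uniq : forall X (h : hom X term), h = bang X
}.
Arguments prod {_} _ _.
Arguments p1 {_ _ _}.
Arguments p2 {_ _ _}.
Arguments pair {_ _ _ _} _ _.
Arguments term {_}.
Arguments bang {_} _.

(* Derived structure: diagonal, product of morphisms, and the canonical
   associator / symmetry of the cartesian monoidal structure.  (Its
   unitors are p2 : I x X -> X and p1 : X x I -> X.) *)
Definition diag {C : CartesianCat} (X : C) : hom X (prod X X) :=
  pair (idm X) (idm X).
Definition fprod {C : CartesianCat} {X Y X' Y' : C}
  (f : hom X X') (g : hom Y Y') : hom (prod X Y) (prod X' Y') :=
  pair (p1 >>> f) (p2 >>> g).
Definition cassoc {C : CartesianCat} (X Y Z : C) :
  hom (prod (prod X Y) Z) (prod X (prod Y Z)) :=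
  pair (p1 >>> p1) (pair (p1 >>> p2) p2).
Definition cswap {C : CartesianCat} (X Y : C) : hom (prod X Y) (prod Y X) :=
  pair p2 p1.

Record SymMonCat : Type := {
  mcat :> Category;
  tens : mcat -> mcat -> mcat;
  tensm : forall {A B A' B' : mcat}, hom A A' -> hom B B' -> hom (tens A B) (tens A' B');
  tensm_id : forall A B, tensm (idm A) (idm B) = idm (tens A B);
  tensm_comp : forall A B A' B' A'' B'' (f : hom A A') (f' : hom A' A'')
      (g : hom B B') (g' : hom B' B''),
      tensm (f >>> f') (g >>> g') = tensm f g >>> tensm f' g';
  munit : mcat;
  alpha : forall A B C : mcat, hom (tens (tens A B) C) (tens A (tens B C));
  alpha_inv : forall A B C : mcat, hom (tens A (tens B C)) (tens (tens A B) C);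
  alpha_iso1 : forall A B C, alpha A B C >>> alpha_inv A B C = idm _;
  alpha_iso2 : forall A B C, alpha_inv A B C >>> alpha A B C = idm _;
  alpha_nat : forall A B C A' B' C' (f : hom A A') (g : hom B B') (h : hom C C'),
      tensm (tensm f g) h >>> alpha A' B' C' = alpha A B C >>> tensm f (tensm g h);
  lam : forall A : mcat, hom (tens munit A) A;
  lam_inv : forall A : mcat, hom A (tens munit A);
  lam_iso1 : forall A, lam A >>> lam_inv A = idm _;
  lam_iso2 : forall A, lam_inv A >>> lam A = idm _;
  lam_nat : forall A A' (f : hom A A'), tensm (idm munit) f >>> lam A' = lam A >>> f;
  rho : forall A : mcat, hom (tens A munit) A;
  rho_inv : forall A : mcat, hom A (tens A munit);
  rho_iso1 : forall A, rho A >>> rho_inv A = idm _;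
  rho_iso2 : forall A, rho_inv A >>> rho A = idm _;
  rho_nat : forall A A' (f : hom A A'), tensm f (idm munit) >>> rho A' = rho A >>> f;
  sigma : forall A B : mcat, hom (tens A B) (tens B A);
  sigma_nat : forall A B A' B' (f : hom A A') (g : hom B B'),
      tensm f g >>> sigma A' B' = sigma A B >>> tensm g f;
  sigma_invol : forall A B, sigma A B >>> sigma B A = idm _;
  pentagon : forall A B C D,
      alpha (tens A B) C D >>> alpha A B (tens C D)
      = tensm (alpha A B C) (idm D) >>> alpha A (tens B C) D >>> tensm (idm A) (alpha B C D);
  triangle : forall A B,
      alpha A munit B >>> tensm (idm A) (lam B) = tensm (rho A) (idm B);
  hexagon : forall A B C,
      alpha A B C >>> sigma A (tens B C) >>> alpha B C A
      = tensm (sigma A B) (idm C) >>> alpha B A C >>> tensm (idm B) (sigma A C)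
}.
Arguments tens {_} _ _.
Arguments tensm {_ _ _ _ _} _ _.
Arguments munit {_}.
Arguments alpha {_} _ _ _.
Arguments alpha_inv {_} _ _ _.
Arguments lam {_} _.
Arguments lam_inv {_} _.
Arguments rho {_} _.
Arguments rho_inv {_} _.
Arguments sigma {_} _ _.

Record LNL : Type := {
  lC : CartesianCat;
  lL : SymMonCat;
  lF : Functor lC lL;
  lU : Functor lL lC;
  eta : forall X : lC, hom X (lU (lF X));
  eps : forall A : lL, hom (lF (lU A)) A;
  eta_nat : forall (X Y : lC) (f : hom X Y),
      f >>> eta Y = eta X >>> fmap lU (fmap lF f);
  eps_nat : forall (A B : lL) (g : hom A B),
      fmap lF (fmap lU g) >>> eps B = eps A >>> g;
  triangle_F : forall X : lC, fmap lF (eta X) >>> eps (lF X) = idm _;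
  triangle_U : forall A : lL, eta (lU A) >>> fmap lU (eps A) = idm _;
  mF : forall X Y : lC, hom (tens (lF X) (lF Y)) (lF (prod X Y));
  mF_inv : forall X Y : lC, hom (lF (prod X Y)) (tens (lF X) (lF Y));
  mF_iso1 : forall X Y, mF X Y >>> mF_inv X Y = idm _;
  mF_iso2 : forall X Y, mF_inv X Y >>> mF X Y = idm _;
  mF1 : hom (@munit lL) (lF term);
  mF1_inv : hom (lF term) (@munit lL);
  mF1_iso1 : mF1 >>> mF1_inv = idm _;
  mF1_iso2 : mF1_inv >>> mF1 = idm _;
  mF_nat : forall (X Y X' Y' : lC) (f : hom X X') (g : hom Y Y'),
      tensm (fmap lF f) (fmap lF g) >>> mF X' Y' = mF X Y >>> fmap lF (fprod f g);
  mF_assoc : forall X Y Z : lC,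
      tensm (mF X Y) (idm (lF Z)) >>> mF (prod X Y) Z >>> fmap lF (cassoc X Y Z)
      = alpha (lF X) (lF Y) (lF Z) >>> tensm (idm (lF X)) (mF Y Z) >>> mF X (prod Y Z);
  mF_lunit : forall X : lC,
      tensm mF1 (idm (lF X)) >>> mF term X >>> fmap lF p2 = lam (lF X);
  mF_runit : forall X : lC,
      tensm (idm (lF X)) mF1 >>> mF X term >>> fmap lF p1 = rho (lF X);
  mF_sym : forall X Y : lC,
      sigma (lF X) (lF Y) >>> mF Y X = mF X Y >>> fmap lF (cswap X Y);
  nU : forall A B : lL, hom (prod (lU A) (lU B)) (lU (tens A B));
  nU0 : hom (@term lC) (lU munit);
  nU_nat : forall (A B A' B' : lL) (f : hom A A') (g : hom B B'),
      fprod (fmap lU f) (fmap lU g) >>> nU A' B' = nU A B >>> fmap lU (tensm f g);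
  nU_assoc : forall A B C : lL,
      fprod (nU A B) (idm (lU C)) >>> nU (tens A B) C >>> fmap lU (alpha A B C)
      = cassoc (lU A) (lU B) (lU C) >>> fprod (idm (lU A)) (nU B C) >>> nU A (tens B C);
  nU_lunit : forall A : lL,
      fprod nU0 (idm (lU A)) >>> nU munit A >>> fmap lU (lam A) = p2;
  nU_runit : forall A : lL,
      fprod (idm (lU A)) nU0 >>> nU A munit >>> fmap lU (rho A) = p1;
  nU_sym : forall A B : lL,
      cswap (lU A) (lU B) >>> nU B A = nU A B >>> fmap lU (sigma A B);
  eta_mon : forall X Y : lC,
      fprod (eta X) (eta Y) >>> nU (lF X) (lF Y) >>> fmap lU (mF X Y) = eta (prod X Y);
  eta_mon0 : nU0 >>> fmap lU mF1 = eta term;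
  eps_mon : forall A B : lL,
      mF (lU A) (lU B) >>> fmap lF (nU A B) >>> eps (tens A B) = tensm (eps A) (eps B);
  eps_mon0 : mF1 >>> fmap lF nU0 >>> eps munit = idm munit
}.
Arguments eta l X : clear implicits.
Arguments eps l A : clear implicits.
Arguments mF l X Y : clear implicits.
Arguments mF_inv l X Y : clear implicits.
Arguments mF1 l : clear implicits.
Arguments mF1_inv l : clear implicits.
Arguments nU l A B : clear implicits.
Arguments nU0 l : clear implicits.

Definition cmap {M : LNL} (X : lC M) : hom (lF M X) (tens (lF M X) (lF M X)) :=
  fmap (lF M) (diag X) >>> mF_inv M X X.
Definition wmap {M : LNL} (X : lC M) : hom (lF M X) (@munit (lL M)) :=
  fmap (lF M) (bang X) >>> mF1_inv M.

Definition Sob (C : CartesianCat) : Type := (ob C * ob C)%type.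
Record SHom (C : CartesianCat) (P Q : Sob C) : Type := mkSHom {
  s_base : hom (fst P) (fst Q);
  s_fib : hom (prod (fst P) (snd P)) (snd Q)
}.
Arguments mkSHom {_ _ _} _ _.
Arguments s_base {_ _ _} _.
Arguments s_fib {_ _ _} _.

Definition S_id {C : CartesianCat} (P : Sob C) : SHom P P :=
  mkSHom (idm (fst P)) p2.
(* (f,u);(g,v) = (f;g, (Delta_X x id_J);(f x u);v), with the associator
   (X x X) x J -> X x (X x J) made explicit. *)
Definition S_comp {C : CartesianCat} {P Q R : Sob C}
  (h : SHom P Q) (k : SHom Q R) : SHom P R :=
  mkSHom (s_base h >>> s_base k)
    (fprod (diag (fst P)) (idm (snd P)) >>> cassoc (fst P) (fst P) (snd P)
       >>> fprod (s_base h) (s_fib h) >>> s_fib k).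
Definition S_cart {C : CartesianCat} {X Y : C} (f : hom X Y) (K : C) :
  SHom (X, K) (Y, K) := @mkSHom C (X, K) (Y, K) f p2.

Definition LSob (M : LNL) : Type := (ob (lC M) * ob (lL M))%type.
Record LSHom (M : LNL) (P Q : LSob M) : Type := mkLSHom {
  ls_base : hom (fst P) (fst Q);
  ls_fib : hom (tens (lF M (fst P)) (snd P)) (snd Q)
}.
Arguments mkLSHom {_ _ _} _ _.
Arguments ls_base {_ _ _} _.
Arguments ls_fib {_ _ _} _.

(* identity (id_X, w_X (x) id_A), with the unitor 1 (x) A -> A explicit *)
Definition LS_id {M : LNL} (P : LSob M) : LSHom P P :=
  mkLSHom (idm (fst P)) (tensm (wmap (fst P)) (idm (snd P)) >>> lam (snd P)).
(* (f,u);(g,v) = (f;g, (c_X (x) id_A);(F f (x) u);v), with the associator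
   explicit *)
Definition LS_comp {M : LNL} {P Q R : LSob M}
  (h : LSHom P Q) (k : LSHom Q R) : LSHom P R :=
  mkLSHom (ls_base h >>> ls_base k)
    (tensm (cmap (fst P)) (idm (snd P))
       >>> alpha (lF M (fst P)) (lF M (fst P)) (snd P)
       >>> tensm (fmap (lF M) (ls_base h)) (ls_fib h) >>> ls_fib k).
Definition LS_cart {M : LNL} {X Y : lC M} (f : hom X Y) (B : lL M) :
  LSHom (X, B) (Y, B) := @mkLSHom M (X, B) (Y, B) f (tensm (wmap X) (idm B) >>> lam B).

Definition US_ob {M : LNL} (P : LSob M) : Sob (lC M) := (fst P, lU M (snd P)).
Definition US_hom {M : LNL} {P Q : LSob M} (h : LSHom P Q) :
  SHom (US_ob P) (US_ob Q) :=
  @mkSHom (lC M) (US_ob P) (US_ob Q) (ls_base h)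
    (fprod (eta M (fst P)) (idm (lU M (snd P))) >>> nU M (lF M (fst P)) (snd P)
       >>> fmap (lU M) (ls_fib h)).

Definition S_vert {C : CartesianCat} {X J K : C} (u : hom (prod X J) K) :
  SHom (X, J) (X, K) := @mkSHom C (X, J) (X, K) (idm X) u.
Definition LS_vert {M : LNL} {X : lC M} {A B : lL M}
  (u : hom (tens (lF M X) A) B) : LSHom (X, A) (X, B) := @mkLSHom M (X, A) (X, B) (idm X) u.

Definition Sv_id {C : CartesianCat} (X J : C) : hom (prod X J) J := p2.
Definition Sv_tens {C : CartesianCat} {X J K J' K' : C}
  (u : hom (prod X J) J') (v : hom (prod X K) K') :
  hom (prod X (prod J K)) (prod J' K') :=
  pair (fprod (idm X) p1 >>> u) (fprod (idm X) p2 >>> v).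
Definition Sv_assoc {C : CartesianCat} (X J K L : C) :
  hom (prod X (prod (prod J K) L)) (prod J (prod K L)) := p2 >>> cassoc J K L.
Definition Sv_lunit {C : CartesianCat} (X J : C) :
  hom (prod X (prod term J)) J := p2 >>> p2.
Definition Sv_runit {C : CartesianCat} (X J : C) :
  hom (prod X (prod J term)) J := p2 >>> p1.
Definition Sv_sym {C : CartesianCat} (X J K : C) :
  hom (prod X (prod J K)) (prod K J) := p2 >>> cswap J K.

Definition LSv_lift {M : LNL} (X : lC M) {A B : lL M} (g : hom A B) :
  hom (tens (lF M X) A) B := tensm (wmap X) g >>> lam B.
(* (id,u) (x)_X (id,v) =
   (id, (c_X (x) id);(id (x) sigma_{FX,A} (x) id);(u (x) v)),
   with associators made explicit *)
Definition LSv_tens {M : LNL} {X : lC M} {A B A' B' : lL M}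
  (u : hom (tens (lF M X) A) A') (v : hom (tens (lF M X) B) B') :
  hom (tens (lF M X) (tens A B)) (tens A' B') :=
  tensm (cmap X) (idm (tens A B))
  >>> alpha (lF M X) (lF M X) (tens A B)
  >>> tensm (idm (lF M X)) (alpha_inv (lF M X) A B)
  >>> tensm (idm (lF M X)) (tensm (sigma (lF M X) A) (idm B))
  >>> tensm (idm (lF M X)) (alpha A (lF M X) B)
  >>> alpha_inv (lF M X) A (tens (lF M X) B)
  >>> tensm u v.
Definition LSv_assoc {M : LNL} (X : lC M) (A B C : lL M) :
  hom (tens (lF M X) (tens (tens A B) C)) (tens A (tens B C)) :=
  LSv_lift X (alpha A B C).
Definition LSv_lunit {M : LNL} (X : lC M) (A : lL M) :
  hom (tens (lF M X) (tens munit A)) A := LSv_lift X (lam A).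
Definition LSv_runit {M : LNL} (X : lC M) (A : lL M) :
  hom (tens (lF M X) (tens A munit)) A := LSv_lift X (rho A).
Definition LSv_sym {M : LNL} (X : lC M) (A B : lL M) :
  hom (tens (lF M X) (tens A B)) (tens B A) := LSv_lift X (sigma A B).

Definition USv {M : LNL} {X : lC M} {A B : lL M}
  (u : hom (tens (lF M X) A) B) : hom (prod X (lU M A)) (lU M B) :=
  s_fib (US_hom (LS_vert u)).

Definition phi0 {M : LNL} (X : lC M) : hom (prod X term) (lU M munit) :=
  p2 >>> nU0 M.
Definition phi2 {M : LNL} (X : lC M) (A B : lL M) :
  hom (prod X (prod (lU M A) (lU M B))) (lU M (tens A B)) :=
  p2 >>> nU M A B.

Definition US_is_functor (M : LNL) : Prop :=
  (forall P : LSob M, US_hom (LS_id P) = S_id (US_ob P)) /\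
  (forall (P Q R : LSob M) (h : LSHom P Q) (k : LSHom Q R),
      US_hom (LS_comp h k) = S_comp (US_hom h) (US_hom k)).

Definition US_split_fibred (M : LNL) : Prop :=
  (forall P : LSob M, fst (US_ob P) = fst P) /\
  (forall (P Q : LSob M) (h : LSHom P Q), s_base (US_hom h) = ls_base h) /\
  (forall (X Y : lC M) (f : hom X Y) (B : lL M),
      US_hom (LS_cart f B) = S_cart f (lU M B)).

Definition US_fibre_sym_lax_monoidal (M : LNL) (X : lC M) : Prop :=
  (forall (A A' B B' : lL M) (u : hom (tens (lF M X) A) A')
          (v : hom (tens (lF M X) B) B'),
      S_comp (S_vert (Sv_tens (USv u) (USv v))) (S_vert (phi2 X A' B'))
      = S_comp (S_vert (phi2 X A B)) (US_hom (LS_vert (LSv_tens u v)))) /\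
  (forall A B C : lL M,
      S_comp (S_comp (S_vert (Sv_tens (phi2 X A B) (Sv_id X (lU M C))))
                     (S_vert (phi2 X (tens A B) C)))
             (US_hom (LS_vert (LSv_assoc X A B C)))
      = S_comp (S_comp (S_vert (Sv_assoc X (lU M A) (lU M B) (lU M C)))
                       (S_vert (Sv_tens (Sv_id X (lU M A)) (phi2 X B C))))
               (S_vert (phi2 X A (tens B C)))) /\
  (forall A : lL M,
      S_comp (S_comp (S_vert (Sv_tens (phi0 X) (Sv_id X (lU M A))))
                     (S_vert (phi2 X munit A)))
             (US_hom (LS_vert (LSv_lunit X A)))
      = S_vert (Sv_lunit X (lU M A))) /\
  (forall A : lL M,
      S_comp (S_comp (S_vert (Sv_tens (Sv_id X (lU M A)) (phi0 X)))
                     (S_vert (phi2 X A munit)))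
             (US_hom (LS_vert (LSv_runit X A)))
      = S_vert (Sv_runit X (lU M A))) /\
  (forall A B : lL M,
      S_comp (S_vert (Sv_sym X (lU M A) (lU M B))) (S_vert (phi2 X B A))
      = S_comp (S_vert (phi2 X A B)) (US_hom (LS_vert (LSv_sym X A B)))).
Arguments US_fibre_sym_lax_monoidal : clear implicits.

(* Main.v *)
Require Import Defs.

Lemma pair_comp {C : CartesianCat} {Z' Z X Y : C} (e : hom Z' Z) (f : hom Z X) (g : hom Z Y) :
  e >>> pair f g = pair (e >>> f) (e >>> g).
Proof.
  rewrite (pair_uniq (e >>> pair f g)), !comp_assoc, pair_p1, pair_p2. reflexivity.
Qed.
Lemma pair_comp' {C : CartesianCat} {Z' Z X Y W : C} (e : hom Z' Z) (f : hom Z X) (g : hom Z Y) (k : hom (prod X Y) W) :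
  e >>> (pair f g >>> k) = pair (e >>> f) (e >>> g) >>> k.
Proof. rewrite <- comp_assoc, pair_comp. reflexivity. Qed.
Lemma pair_p1' {C : CartesianCat} {Z X Y W : C} (f : hom Z X) (g : hom Z Y) (k : hom X W) :
  pair f g >>> (p1 >>> k) = f >>> k.
Proof. rewrite <- comp_assoc, pair_p1. reflexivity. Qed.
Lemma pair_p2' {C : CartesianCat} {Z X Y W : C} (f : hom Z X) (g : hom Z Y) (k : hom Y W) :
  pair f g >>> (p2 >>> k) = g >>> k.
Proof. rewrite <- comp_assoc, pair_p2. reflexivity. Qed.
Lemma pair_surj {C : CartesianCat} {Z X Y : C} (e : hom Z (prod X Y)) :
  pair (e >>> p1) (e >>> p2) = e.
Proof. symmetry; apply pair_uniq. Qed.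
Lemma pair_id {C : CartesianCat} {X Y : C} : pair (@p1 C X Y) p2 = idm _.
Proof. rewrite (pair_uniq (idm _)), !comp_idl. reflexivity. Qed.

Ltac pnorm := repeat progress (unfold fprod, diag, cassoc, cswap;
  rewrite ?comp_assoc, ?comp_idl, ?comp_idr, ?pair_p1, ?pair_p2, ?pair_p1', ?pair_p2',
    ?pair_comp', ?pair_comp, ?pair_surj, ?pair_id).

Definition nn {M : LNL} {Z : lC M} {A B : lL M} (f : hom Z (lU M A)) (g : hom Z (lU M B)) :
  hom Z (lU M (tens A B)) := pair f g >>> nU M A B.


Lemma fmap_comp' {C D : Category} (F : Functor C D) {a b c : C} {d : D} (f : hom a b) (g : hom b c) (k : hom (F c) d) :
  fmap F f >>> (fmap F g >>> k) = fmap F (f >>> g) >>> k.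
Proof. rewrite fmap_comp, comp_assoc. reflexivity. Qed.

Lemma nn_comp {M : LNL} {Z' Z : lC M} {A B : lL M} (e : hom Z' Z) (f : hom Z (lU M A)) (g : hom Z (lU M B)) :
  e >>> nn f g = nn (e >>> f) (e >>> g).
Proof. unfold nn. rewrite <- comp_assoc, pair_comp. reflexivity. Qed.
Lemma nn_comp' {M : LNL} {Z' Z : lC M} {A B : lL M} {W} (e : hom Z' Z) (f : hom Z (lU M A)) (g : hom Z (lU M B)) (k : hom _ W) :
  e >>> (nn f g >>> k) = nn (e >>> f) (e >>> g) >>> k.
Proof. rewrite <- comp_assoc, nn_comp. reflexivity. Qed.
Lemma nn_fold {M : LNL} {Z : lC M} {A B : lL M} (f : hom Z (lU M A)) (g : hom Z (lU M B)) :
  pair f g >>> nU M A B = nn f g.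
Proof. reflexivity. Qed.
Lemma nn_fold' {M : LNL} {Z : lC M} {A B : lL M} {W} (f : hom Z (lU M A)) (g : hom Z (lU M B)) (k : hom _ W) :
  pair f g >>> (nU M A B >>> k) = nn f g >>> k.
Proof. unfold nn. rewrite comp_assoc. reflexivity. Qed.
Lemma nU_expand {M : LNL} {Z : lC M} {A B : lL M} (e : hom Z (prod (lU M A) (lU M B))) :
  e >>> nU M A B = nn (e >>> p1) (e >>> p2).
Proof. unfold nn. rewrite pair_surj. reflexivity. Qed.
Lemma nU_expand' {M : LNL} {Z : lC M} {A B : lL M} {W} (e : hom Z (prod (lU M A) (lU M B))) (k : hom _ W) :
  e >>> (nU M A B >>> k) = nn (e >>> p1) (e >>> p2) >>> k.
Proof. rewrite <- comp_assoc, nU_expand. reflexivity. Qed.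

Lemma nn_tens {M : LNL} {Z : lC M} {A B A' B' : lL M} (f : hom Z (lU M A)) (g : hom Z (lU M B))
  (h : hom A A') (k : hom B B') :
  nn f g >>> fmap (lU M) (tensm h k) = nn (f >>> fmap (lU M) h) (g >>> fmap (lU M) k).
Proof.
  unfold nn. rewrite comp_assoc, <- nU_nat, <- comp_assoc. unfold fprod.
  rewrite pair_comp, <- !comp_assoc, pair_p1, pair_p2. reflexivity.
Qed.
Lemma nn_tens' {M : LNL} {Z : lC M} {A B A' B' : lL M} {W} (f : hom Z (lU M A)) (g : hom Z (lU M B))
  (h : hom A A') (k : hom B B') (r : hom _ W) :
  nn f g >>> (fmap (lU M) (tensm h k) >>> r) = nn (f >>> fmap (lU M) h) (g >>> fmap (lU M) k) >>> r.
Proof. rewrite <- comp_assoc, nn_tens. reflexivity. Qed.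

Lemma nn_alpha {M : LNL} {Z : lC M} {A B C : lL M} (f : hom Z (lU M A)) (g : hom Z (lU M B)) (h : hom Z (lU M C)) :
  nn (nn f g) h >>> fmap (lU M) (alpha A B C) = nn f (nn g h).
Proof.
  unfold nn.
  assert (E : pair (pair f g >>> nU M A B) h = pair (pair f g) h >>> fprod (nU M A B) (idm _)).
  { unfold fprod. rewrite pair_comp, <- !comp_assoc, pair_p1, pair_p2, comp_idr. reflexivity. }
  rewrite E, !comp_assoc, <- (comp_assoc (fprod _ _)), nU_assoc.
  pnorm. reflexivity.
Qed.
Lemma nn_alpha' {M : LNL} {Z : lC M} {A B C : lL M} {W} (f : hom Z (lU M A)) (g : hom Z (lU M B)) (h : hom Z (lU M C)) (r : hom _ W) :
  nn (nn f g) h >>> (fmap (lU M) (alpha A B C) >>> r) = nn f (nn g h) >>> r.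
Proof. rewrite <- comp_assoc, nn_alpha. reflexivity. Qed.
Lemma nn_alphainv {M : LNL} {Z : lC M} {A B C : lL M} (f : hom Z (lU M A)) (g : hom Z (lU M B)) (h : hom Z (lU M C)) :
  nn f (nn g h) >>> fmap (lU M) (alpha_inv A B C) = nn (nn f g) h.
Proof.
  rewrite <- nn_alpha, comp_assoc, <- fmap_comp, alpha_iso1, fmap_id, comp_idr. reflexivity.
Qed.
Lemma nn_alphainv' {M : LNL} {Z : lC M} {A B C : lL M} {W} (f : hom Z (lU M A)) (g : hom Z (lU M B)) (h : hom Z (lU M C)) (r : hom _ W) :
  nn f (nn g h) >>> (fmap (lU M) (alpha_inv A B C) >>> r) = nn (nn f g) h >>> r.
Proof. rewrite <- comp_assoc, nn_alphainv. reflexivity. Qed.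
Lemma nn_sigma {M : LNL} {Z : lC M} {A B : lL M} (f : hom Z (lU M A)) (g : hom Z (lU M B)) :
  nn f g >>> fmap (lU M) (sigma A B) = nn g f.
Proof.
  unfold nn. rewrite comp_assoc, <- nU_sym. unfold cswap. pnorm. reflexivity.
Qed.
Lemma nn_sigma' {M : LNL} {Z : lC M} {A B : lL M} {W} (f : hom Z (lU M A)) (g : hom Z (lU M B)) (r : hom _ W) :
  nn f g >>> (fmap (lU M) (sigma A B) >>> r) = nn g f >>> r.
Proof. rewrite <- comp_assoc, nn_sigma. reflexivity. Qed.
Lemma nn_lunit {M : LNL} {Z : lC M} {A : lL M} (e : hom Z (lU M munit)) (f : hom Z (lU M A)) :
  e = bang Z >>> nU0 M -> nn e f >>> fmap (lU M) (lam A) = f.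
Proof.
  intros ->. unfold nn.
  assert (E : pair (bang Z >>> nU0 M) f = pair (bang Z) f >>> fprod (nU0 M) (idm _)).
  { unfold fprod. pnorm. reflexivity. }
  rewrite E, !comp_assoc, <- (comp_assoc (fprod _ _)), nU_lunit, pair_p2. reflexivity.
Qed.
Lemma nn_runit {M : LNL} {Z : lC M} {A : lL M} (e : hom Z (lU M munit)) (f : hom Z (lU M A)) :
  e = bang Z >>> nU0 M -> nn f e >>> fmap (lU M) (rho A) = f.
Proof.
  intros ->. unfold nn.
  assert (E : pair f (bang Z >>> nU0 M) = pair f (bang Z) >>> fprod (idm _) (nU0 M)).
  { unfold fprod. pnorm. reflexivity. }
  rewrite E, !comp_assoc, <- (comp_assoc (fprod _ _)), nU_runit, pair_p1. reflexivity.
Qed.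
Lemma eta_c {M : LNL} {Z X : lC M} (e : hom Z X) :
  e >>> (eta M X >>> fmap (lU M) (cmap X)) = nn (e >>> eta M X) (e >>> eta M X).
Proof.
  unfold cmap. rewrite fmap_comp, <- (comp_assoc (eta M X)), <- eta_nat.
  rewrite <- eta_mon. rewrite !comp_assoc, <- fmap_comp, mF_iso1, fmap_id, comp_idr.
  unfold nn. rewrite <- (comp_assoc (diag X)). unfold diag, fprod. pnorm. reflexivity.
Qed.
Lemma eta_c' {M : LNL} {Z X : lC M} {W} (e : hom Z X) (r : hom _ W) :
  e >>> (eta M X >>> (fmap (lU M) (cmap X) >>> r)) = nn (e >>> eta M X) (e >>> eta M X) >>> r.
Proof. rewrite <- (eta_c e), !comp_assoc. reflexivity. Qed.
Lemma eta_w {M : LNL} {Z X : lC M} (e : hom Z X) :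
  e >>> (eta M X >>> fmap (lU M) (wmap X)) = bang Z >>> nU0 M.
Proof.
  unfold wmap. rewrite fmap_comp, <- (comp_assoc (eta M X)), <- eta_nat.
  rewrite <- eta_mon0. rewrite !comp_assoc, <- fmap_comp, mF1_iso1, fmap_id, comp_idr.
  rewrite <- comp_assoc, (bang_uniq (e >>> bang X)). reflexivity.
Qed.
Lemma eta_w' {M : LNL} {Z X : lC M} {W} (e : hom Z X) (r : hom _ W) :
  e >>> (eta M X >>> (fmap (lU M) (wmap X) >>> r)) = (bang Z >>> nU0 M) >>> r.
Proof. rewrite <- (eta_w e), !comp_assoc. reflexivity. Qed.

Lemma SHom_eq {C : CartesianCat} {P Q : Sob C} (h k : SHom P Q) :
  s_base h = s_base k -> s_fib h = s_fib k -> h = k.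
Proof. destruct h, k; simpl; intros -> ->; reflexivity. Qed.

Ltac nnorm := repeat progress (unfold fprod, diag, cassoc, cswap;
  rewrite ?comp_assoc, ?comp_idl, ?comp_idr, ?fmap_comp, ?fmap_id, ?pair_p1, ?pair_p2, ?pair_p1', ?pair_p2',
    ?pair_comp', ?pair_comp, ?pair_surj, ?pair_id, ?nn_fold', ?nn_fold, ?nn_comp', ?nn_comp,
    ?nn_tens', ?nn_tens, ?nn_alpha', ?nn_alpha, ?nn_alphainv', ?nn_alphainv, ?nn_sigma', ?nn_sigma,
    ?eta_c', ?eta_c, ?eta_w', ?eta_w).
Lemma US_id_fib {M : LNL} (P : LSob M) : US_hom (LS_id P) = S_id (US_ob P).
Proof.
  apply SHom_eq; [reflexivity|]. destruct P as [X A]. cbn [US_hom LS_id S_id s_fib ls_fib US_ob fst snd].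
  nnorm.
  apply nn_lunit. reflexivity.
Qed.
Lemma US_comp_fib {M : LNL} (P Q R : LSob M) (h : LSHom P Q) (k : LSHom Q R) :
      US_hom (LS_comp h k) = S_comp (US_hom h) (US_hom k).
Proof.
  apply SHom_eq; [reflexivity|]. destruct P as [X A], Q as [Y B], R as [Z D], h as [f u], k as [g v].
  cbn [US_hom LS_comp S_comp s_fib ls_fib s_base ls_base US_ob fst snd].
  nnorm.
  rewrite (eta_nat (f : hom X Y)). nnorm. reflexivity.
Qed.
Lemma US_cart {M : LNL} (X Y : lC M) (f : hom X Y) (B : lL M) :
      US_hom (LS_cart f B) = S_cart f (lU M B).
Proof.
  apply SHom_eq; [reflexivity|]. cbn [US_hom LS_cart S_cart s_fib ls_fib US_ob fst snd].
  nnorm. apply nn_lunit. reflexivity.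
Qed.
Lemma mon {M : LNL} (X : lC M) : US_fibre_sym_lax_monoidal M X.
Proof.
  unfold US_fibre_sym_lax_monoidal. repeat split.
  - intros. apply SHom_eq; [reflexivity|].
    cbn [US_hom S_comp S_vert LS_vert s_fib ls_fib s_base ls_base US_ob fst snd].
    unfold USv, Sv_tens, phi2, LSv_tens. cbn [US_hom S_comp S_vert LS_vert s_fib ls_fib s_base ls_base US_ob fst snd].
    nnorm. rewrite nU_expand. nnorm. reflexivity.
  - intros. apply SHom_eq; [cbn; rewrite ?comp_idl; reflexivity|].
    cbn [US_hom S_comp S_vert LS_vert s_fib ls_fib s_base ls_base US_ob fst snd].
    unfold USv, Sv_tens, Sv_id, Sv_assoc, phi2, LSv_assoc, LSv_lift.
    cbn [US_hom S_comp S_vert LS_vert s_fib ls_fib s_base ls_base US_ob fst snd].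
    nnorm. rewrite nn_lunit by reflexivity. rewrite (nU_expand p1). nnorm. reflexivity.
  - intros. apply SHom_eq; [cbn; rewrite ?comp_idl; reflexivity|].
    cbn [US_hom S_comp S_vert LS_vert s_fib ls_fib s_base ls_base US_ob fst snd].
    unfold USv, Sv_tens, Sv_id, Sv_lunit, phi2, phi0, LSv_lunit, LSv_lift.
    cbn [US_hom S_comp S_vert LS_vert s_fib ls_fib s_base ls_base US_ob fst snd].
    nnorm. rewrite nn_lunit by reflexivity. rewrite nn_lunit. reflexivity.
    rewrite <- comp_assoc, (bang_uniq (p2 >>> p1)). reflexivity.
  - intros. apply SHom_eq; [cbn; rewrite ?comp_idl; reflexivity|].
    cbn [US_hom S_comp S_vert LS_vert s_fib ls_fib s_base ls_base US_ob fst snd].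
    unfold USv, Sv_tens, Sv_id, Sv_runit, phi2, phi0, LSv_runit, LSv_lift.
    cbn [US_hom S_comp S_vert LS_vert s_fib ls_fib s_base ls_base US_ob fst snd].
    nnorm. rewrite nn_lunit by reflexivity. rewrite nn_runit. reflexivity.
    rewrite <- comp_assoc, (bang_uniq (p2 >>> p2)). reflexivity.
  - intros. apply SHom_eq; [cbn; rewrite ?comp_idl; reflexivity|].
    cbn [US_hom S_comp S_vert LS_vert s_fib ls_fib s_base ls_base US_ob fst snd].
    unfold USv, Sv_sym, phi2, LSv_sym, LSv_lift.
    cbn [US_hom S_comp S_vert LS_vert s_fib ls_fib s_base ls_base US_ob fst snd].
    nnorm. rewrite nn_lunit by reflexivity. rewrite nU_expand'. nnorm. reflexivity.
Qed.

Theorem proposition3p11 (M : LNL) :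
  US_is_functor M /\ US_split_fibred M /\
  (forall X : lC M, US_fibre_sym_lax_monoidal M X).
Proof.
  split; [split; [apply US_id_fib | apply US_comp_fib]|].
  split; [split; [reflexivity | split; [reflexivity | apply US_cart]]|].
  apply mon.
Qed.
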